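(* The map $R$ is uniformly DC1-chaotic: there exist an uncountable set $S\subset[0,1]$ and a constant $\bar\delta>0$ such that for all $x\ne y$ in $S$ and every $\delta>0$, $$\limsup_{n\to\infty}\frac1n\#\{0\le k\le n-1:|R^k(x)-R^k(y)|<\delta\}=1,$$ $$\liminf_{n\to\infty}\frac1n\#\{0\le k\le n-1:|R^k(x)-R^k(y)|<\bar\delta\}=0.$$
   Context: Define $\rho$ on binary words: for $b=b_1b_2\dots$, $\rho(b)$ is obtained by deleting every digit $b_n=0$ and replacing every $b_n=1$ by $0$ if $n$ is odd and by $1$ if $n$ is even. For $x\in(0,1]$ let $\beta(x)$ be the unique binary expansion of $x$ with infinitely many $1$'s. Define $R:[0,1]\to[0,1]$ by $R(0)=2/3$ and, for $x\in(0,1]$, $R(x)=\sum_{n\ge1}c_n2^{-n}$ where $c=\rho(\beta(x))$. $\#$ denotes cardinality. *)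

(* Defs.v *)
From Stdlib Require Import Reals Lra Lia Arith List ClassicalEpsilon.
From Coquelicot Require Import Coquelicot.
Open Scope R_scope.

(* Binary digit sequences are b : nat -> bool indexed from 1 as in the paper
   (b n is the digit b_n, n >= 1); the unused entry b 0 is fixed to false. *)

Definition is_binexp (x : R) (b : nat -> bool) : Prop :=
  b 0%nat = false /\
  (forall N : nat, exists n : nat, (N <= n)%nat /\ b n = true) /\
  is_series (fun n : nat => if b n then (/2) ^ n else 0) x.

(* beta x : the (unique, for x in (0,1]) binary expansion of x with
   infinitely many 1's. *)
Definition beta (x : R) : nat -> bool :=
  epsilon (inhabits (fun _ : nat => false)) (is_binexp x).

Definition ones (b : nat -> bool) (n : nat) : nat :=
  length (filter b (seq 1 n)).

(* k-th digit (k >= 1) of rho(b): rho deletes the 0's and replaces the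
   digit b_n = 1 by 0 if n is odd and by 1 if n is even. *)
Definition rho_digit (b : nat -> bool) (k : nat) : Prop :=
  exists n : nat, Nat.Even n /\ b n = true /\ ones b n = k.

Definition Rmap (x : R) : R :=
  if Req_EM_T x 0 then 2 / 3
  else Series (fun k : nat =>
         if Nat.eq_dec k 0 then 0
         else if excluded_middle_informative (rho_digit (beta x) k)
              then (/2) ^ k else 0).

Definition close_count (x y d : R) (n : nat) : nat :=
  length (filter (fun k : nat =>
     if Rlt_dec (Rabs (Nat.iter k Rmap x - Nat.iter k Rmap y)) d then true else false)
     (seq 0 n)).

Definition close_freq (x y d : R) (n : nat) : R :=
  INR (close_count x y d n) / INR n.

Definition uncountable (S : R -> Prop) : Prop :=
  ~ exists f : R -> nat, forall x y, S x -> S y -> f x = f y -> x = y.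

(* Main.v *)
Require Import Defs.
From Stdlib Require Import Reals Lra Lia Arith List ClassicalEpsilon FunctionalExtensionality Classical.
From Coquelicot Require Import Coquelicot.
Open Scope R_scope.

Section Dig.
Variable J : nat -> nat.
Hypothesis NoHH : forall k, J k = 0%nat -> J (S k) <> 0%nat.

Fixpoint Df (f k n : nat) : bool :=
  match f with
  | O => false
  | S f' =>
    if (n <=? 2 * J k)%nat then false
    else if Nat.odd (n - 2 * J k) then negb (Df f' (S k) (Nat.div2 (S (n - 2 * J k))))
         else Df f' (S k) (Nat.div2 (S (n - 2 * J k)))
  end.

Lemma Df_S f k n : Df (S f) k n =
    if (n <=? 2 * J k)%nat then false
    else if Nat.odd (n - 2 * J k) then negb (Df f (S k) (Nat.div2 (S (n - 2 * J k))))
         else Df f (S k) (Nat.div2 (S (n - 2 * J k))).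
Proof. reflexivity. Qed.

Definition nu (k n : nat) : nat := (2 * n + (if Nat.eq_dec (J k) 0 then 1 else 0))%nat.

Lemma div2_bound n : (2 * Nat.div2 (S n) <= S n)%nat /\ (S n <= 2 * Nat.div2 (S n) + 1)%nat.
Proof.
  pose proof (Nat.div2_odd (S n)) as H. revert H. generalize (Nat.div2 (S n)). destruct (Nat.odd (S n)); simpl; lia.
Qed.

Lemma nu_dec k n : (2 * J k < n)%nat ->
  (nu (S k) (Nat.div2 (S (n - 2 * J k))) < nu k n)%nat.
Proof.
  intros Hn. unfold nu. pose proof (div2_bound (n - 2 * J k)).
  pose proof (NoHH k).
  destruct (Nat.eq_dec (J k) 0); destruct (Nat.eq_dec (J (S k)) 0); try lia.
Qed.

Lemma Df_stable : forall f k n g, (nu k n < f)%nat -> (f <= g)%nat -> Df f k n = Df g k n.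
Proof.
  induction f as [|f IH]; intros k n g H1 H2; [lia|].
  destruct g as [|g]; [lia|]. rewrite !Df_S.
  destruct (n <=? 2 * J k)%nat eqn:E; [reflexivity|].
  apply Nat.leb_gt in E. pose proof (nu_dec k n E).
  rewrite (IH (S k) _ g) by lia. reflexivity.
Qed.

Definition dig (k n : nat) : bool := Df (2 * n + 2) k n.

Lemma dig_eq k n : dig k n =
    if (n <=? 2 * J k)%nat then false
    else if Nat.odd (n - 2 * J k) then negb (dig (S k) (Nat.div2 (S (n - 2 * J k))))
         else dig (S k) (Nat.div2 (S (n - 2 * J k))).
Proof.
  unfold dig at 1. replace (2 * n + 2)%nat with (S (2 * n + 1)) by lia. rewrite Df_S.
  destruct (n <=? 2 * J k)%nat eqn:E; [reflexivity|].
  apply Nat.leb_gt in E. pose proof (nu_dec k n E).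
  assert (nu k n <= 2 * n + 1)%nat by (unfold nu; destruct Nat.eq_dec; lia).
  set (m := Nat.div2 (S (n - 2 * J k))) in *.
  assert (nu (S k) m < 2 * m + 2)%nat by (unfold nu; destruct Nat.eq_dec; lia).
  unfold dig.
  assert (Df (2 * n + 1) (S k) m = Df (2 * m + 2) (S k) m) as ->.
  { destruct (Nat.le_ge_cases (2 * n + 1) (2 * m + 2)).
    - apply Df_stable; lia.
    - symmetry; apply Df_stable; lia. }
  reflexivity.
Qed.

Lemma dig_0 k : dig k 0 = false.
Proof. rewrite dig_eq. reflexivity. Qed.

Lemma dig_low k n : (n <= 2 * J k)%nat -> dig k n = false.
Proof. intros H. rewrite dig_eq. apply Nat.leb_le in H. now rewrite H. Qed.

Lemma dig_odd k i : dig k (2 * J k + 2 * i + 1) = negb (dig (S k) (S i)).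
Proof.
  rewrite dig_eq. destruct (_ <=? _)%nat eqn:E. { apply Nat.leb_le in E; lia. }
  replace (2 * J k + 2 * i + 1 - 2 * J k)%nat with (S (2 * i)) by lia.
  replace (S (S (2 * i))) with (2 * S i)%nat by lia. rewrite Nat.div2_double.
  rewrite Nat.odd_succ, Nat.even_mul. reflexivity.
Qed.

Lemma dig_even k i : dig k (2 * J k + 2 * i + 2) = dig (S k) (S i).
Proof.
  rewrite dig_eq. destruct (_ <=? _)%nat eqn:E. { apply Nat.leb_le in E; lia. }
  replace (2 * J k + 2 * i + 2 - 2 * J k)%nat with (2 * S i)%nat by lia.
  rewrite Nat.div2_succ_double. rewrite Nat.odd_mul. reflexivity.
Qed.

Lemma ones_S b n : ones b (S n) = (ones b n + (if b (S n) then 1 else 0))%nat.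
Proof.
  unfold ones. rewrite seq_S, filter_app, length_app. simpl.
  destruct (b (S n)); simpl; lia.
Qed.

Lemma ones_low k n : (n <= 2 * J k)%nat -> ones (dig k) n = 0%nat.
Proof.
  induction n; intros H. reflexivity.
  rewrite ones_S, IHn by lia. rewrite dig_low by lia. reflexivity.
Qed.

Lemma ones_pairs k i : ones (dig k) (2 * J k + 2 * i) = i.
Proof.
  induction i.
  - rewrite Nat.add_0_r. apply ones_low; lia.
  - replace (2 * J k + 2 * S i)%nat with (S (S (2 * J k + 2 * i))) by lia.
    rewrite !ones_S, IHi.
    replace (S (2 * J k + 2 * i)) with (2 * J k + 2 * i + 1)%nat by lia.
    replace (S (2 * J k + 2 * i + 1)) with (2 * J k + 2 * i + 2)%nat by lia.
    rewrite dig_odd, dig_even. destruct (dig (S k) (S i)); simpl; lia.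
Qed.

Lemma rho_dig k m : (1 <= m)%nat -> (rho_digit (dig k) m <-> dig (S k) m = true).
Proof.
  intros Hm. split.
  - intros [n [Hev [Hb Ho]]].
    destruct (Nat.le_gt_cases n (2 * J k)). { rewrite dig_low in Hb by lia. discriminate. }
    destruct Hev as [h Hh].
    assert (exists i, n = 2 * J k + 2 * i + 2)%nat as [i ->] by (exists (h - J k - 1)%nat; lia).
    rewrite dig_even in Hb.
    replace (2 * J k + 2 * i + 2)%nat with (2 * J k + 2 * S i)%nat in Ho by lia.
    rewrite ones_pairs in Ho. subst m. exact Hb.
  - intros H. destruct m as [|i]; [lia|].
    exists (2 * J k + 2 * i + 2)%nat. split; [|split].
    + exists (J k + i + 1)%nat. lia.
    + rewrite dig_even. exact H.
    + replace (2 * J k + 2 * i + 2)%nat with (2 * J k + 2 * S i)%nat by lia.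
      apply ones_pairs.
Qed.

Lemma dig_inf k N : exists n, (N <= n)%nat /\ dig k n = true.
Proof.
  destruct (dig (S k) (S N)) eqn:E.
  - exists (2 * J k + 2 * N + 2)%nat. rewrite dig_even. split; [lia|exact E].
  - exists (2 * J k + 2 * N + 1)%nat. rewrite dig_odd, E. split; [lia|reflexivity].
Qed.

End Dig.

Definition term (b : nat -> bool) (n : nat) : R := if b n then (/2) ^ n else 0.
Definition val (b : nat -> bool) : R := Series (term b).

Lemma half_pow_pos n : 0 < (/2) ^ n.
Proof. apply pow_lt; lra. Qed.

Lemma term_bnd b n : 0 <= term b n <= (/2) ^ n.
Proof. unfold term. pose proof (half_pow_pos n). destruct (b n); lra. Qed.

Lemma geom_is : is_series (fun n => (/2) ^ n) 2.
Proof.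
  assert (H : is_series (fun n => (/2) ^ n) (/ (1 - /2))).
  { apply is_series_geom. rewrite Rabs_pos_eq; lra. }
  replace (/ (1 - /2)) with 2 in H by field. exact H.
Qed.

Lemma geom_ex : ex_series (fun n => (/2) ^ n).
Proof. eexists; apply geom_is. Qed.

Lemma ex_bnd (a : nat -> R) : (forall n, 0 <= a n <= (/2) ^ n) -> ex_series a.
Proof.
  intros H. apply (ex_series_le a (fun n => (/2)^n)); [|apply geom_ex].
  intros n. specialize (H n). change (Rabs (a n) <= (/2)^n). rewrite Rabs_pos_eq; lra.
Qed.

Lemma term_ex b : ex_series (term b).
Proof. apply ex_bnd, term_bnd. Qed.

Lemma Series_ge_sum (a : nat -> R) N : (forall n, 0 <= a n) -> ex_series a ->
  sum_f_R0 a N <= Series a.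
Proof.
  intros H1 H2. apply sum_incr; [|exact H1].
  apply Series_correct in H2. apply is_series_Reals in H2. exact H2.
Qed.

Lemma sum_ge_term (a : nat -> R) N : (forall n, 0 <= a n) -> a N <= sum_f_R0 a N.
Proof.
  intros H. destruct N; simpl. lra. pose proof (cond_pos_sum a N H). lra.
Qed.

Definition tail (b : nat -> bool) N := Series (fun k => term b (S N + k)).

Lemma val_split b N : val b = sum_f_R0 (term b) N + tail b N.
Proof.
  unfold val, tail. rewrite (Series_incr_n (term b) (S N)); [reflexivity|lia|apply term_ex].
Qed.

Lemma tail_ex b N : ex_series (fun k => term b (S N + k)).
Proof.
  apply ex_bnd. intros n. pose proof (term_bnd b (S N + n)).
  rewrite pow_add in H. pose proof (half_pow_pos (S N)). pose proof (half_pow_pos n).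
  split; [lra|]. destruct H. eapply Rle_trans; [exact H2|].
  rewrite <- (Rmult_1_l ((/2)^n)) at 2. apply Rmult_le_compat_r; [lra|].
  assert (0 <= (/2)^(S N) < 1) by (apply pow_lt_1_compat; [lra|lia]). lra.
Qed.

Lemma tail_nonneg b N : 0 <= tail b N.
Proof.
  unfold tail. eapply Rle_trans; [|apply Series_ge_sum with (N := 0%nat)].
  - simpl. apply term_bnd.
  - intros n; apply term_bnd.
  - apply tail_ex.
Qed.

Lemma tail_ge b N i : term b (S N + i) <= tail b N.
Proof.
  unfold tail. eapply Rle_trans; [|apply Series_ge_sum with (N := i)].
  - apply (sum_ge_term (fun k => term b (S N + k))). intros n; apply term_bnd.
  - intros n; apply term_bnd.
  - apply tail_ex.
Qed.

Lemma tail_le b N : tail b N <= (/2) ^ N.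
Proof.
  unfold tail.
  assert (E : Series (fun k => (/2) ^ (S N) * (/2) ^ k) = (/2)^N).
  { rewrite Series_scal_l. change (pow (/2)) with (fun n => (/2)^n). rewrite (is_series_unique _ _ geom_is). simpl. field. }
  rewrite <- E. apply Series_le.
  - intros n. rewrite <- pow_add. apply term_bnd.
  - apply (ex_series_scal_l ((/2)^(S N)) (fun k => (/2)^k)). apply geom_ex.
Qed.

Lemma val_agree b b' N : (forall n, (n <= N)%nat -> b n = b' n) ->
  Rabs (val b - val b') <= (/2) ^ N.
Proof.
  intros H. rewrite (val_split b N), (val_split b' N).
  rewrite (sum_eq (term b) (term b') N).
  2:{ intros i Hi. unfold term. rewrite H by exact Hi. reflexivity. }
  pose proof (tail_nonneg b N). pose proof (tail_nonneg b' N).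
  pose proof (tail_le b N). pose proof (tail_le b' N).
  apply Rabs_le. lra.
Qed.

Lemma val_ge_sum b N : sum_f_R0 (term b) N <= val b.
Proof. rewrite (val_split b N). pose proof (tail_nonneg b N). lra. Qed.

Lemma val_ge_term b N : term b N <= val b.
Proof.
  eapply Rle_trans; [apply sum_ge_term|apply val_ge_sum]. intros; apply term_bnd.
Qed.

Lemma val_nonneg b : 0 <= val b.
Proof. eapply Rle_trans; [|apply (val_ge_term b 0)]. apply term_bnd. Qed.

Lemma val_le1 b : b 0%nat = false -> val b <= 1.
Proof.
  intros H. rewrite (val_split b 0). simpl. unfold term at 1. rewrite H.
  pose proof (tail_le b 0). simpl in H0. lra.
Qed.

Definition infones (b : nat -> bool) := forall N, exists n, (N <= n)%nat /\ b n = true.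

Lemma val_binexp b : b 0%nat = false -> infones b -> is_binexp (val b) b.
Proof.
  intros H0 H1. split; [exact H0|split; [exact H1|]]. apply Series_correct, term_ex.
Qed.

Lemma binexp_val x b : is_binexp x b -> x = val b.
Proof. intros [_ [_ H]]. symmetry. apply is_series_unique. exact H. Qed.

Lemma uniq_aux b b' n : infones b -> val b = val b' ->
  (forall m, (m < S n)%nat -> b m = b' m) -> b (S n) = true -> b' (S n) = false -> False.
Proof.
  intros Hinf Hv Hag H1 H2.
  rewrite (val_split b (S n)), (val_split b' (S n)) in Hv. simpl in Hv.
  rewrite (sum_eq (term b) (term b') n) in Hv.
  2:{ intros i Hi. unfold term. rewrite Hag by lia. reflexivity. }
  unfold term at 2 4 in Hv. rewrite H1, H2 in Hv.
  destruct (Hinf (S (S n))) as [m [Hm Hbm]].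
  pose proof (tail_ge b (S n) (m - S (S n))).
  replace (S (S n) + (m - S (S n)))%nat with m in H by lia.
  unfold term at 1 in H. rewrite Hbm in H. pose proof (half_pow_pos m).
  pose proof (tail_le b' (S n)). simpl in *. lra.
Qed.

Lemma binexp_unique x b b' : is_binexp x b -> is_binexp x b' -> forall n, b n = b' n.
Proof.
  intros Hb Hb'. pose proof (binexp_val _ _ Hb) as E1. pose proof (binexp_val _ _ Hb') as E2.
  destruct Hb as [Hb0 [Hbi _]]. destruct Hb' as [Hb0' [Hbi' _]].
  intros n. induction n as [n IH] using (well_founded_induction lt_wf).
  destruct n as [|n]. { congruence. }
  destruct (b (S n)) eqn:Eb, (b' (S n)) eqn:Eb'; try reflexivity.
  - exfalso. apply (uniq_aux b b' n Hbi); auto. congruence.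
  - exfalso. apply (uniq_aux b' b n Hbi'); auto. congruence.
    intros m Hm. symmetry. apply IH. exact Hm.
Qed.

Lemma beta_val b : b 0%nat = false -> infones b -> beta (val b) = b.
Proof.
  intros H0 H1. pose proof (val_binexp b H0 H1) as Hb.
  assert (Hs : is_binexp (val b) (beta (val b))).
  { unfold beta. apply epsilon_spec. exists b. exact Hb. }
  apply functional_extensionality. intros n. apply (binexp_unique (val b)); assumption.
Qed.

Lemma val_pos b : infones b -> 0 < val b.
Proof.
  intros H. destruct (H 0%nat) as [n [_ Hn]].
  eapply Rlt_le_trans; [|apply (val_ge_term b n)]. unfold term. rewrite Hn. apply half_pow_pos.
Qed.

Definition NoHH (J : nat -> nat) := forall k, J k = 0%nat -> J (S k) <> 0%nat.

Lemma dig_infones J (H : NoHH J) k : infones (dig J k).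
Proof. intros N. apply (dig_inf J H). Qed.

Lemma Rmap_dig J (H : NoHH J) k : Rmap (val (dig J k)) = val (dig J (S k)).
Proof.
  unfold Rmap. destruct (Req_EM_T _ 0) as [E|_].
  { pose proof (val_pos _ (dig_infones J H k)). lra. }
  rewrite (beta_val _ (dig_0 J H k) (dig_infones J H k)).
  unfold val. apply Series_ext. intros n. unfold term.
  destruct (Nat.eq_dec n 0) as [->|Hn]. { rewrite dig_0 by exact H. reflexivity. }
  destruct (excluded_middle_informative _) as [r|r].
  - apply (rho_dig J H k n) in r; [|lia]. rewrite r. reflexivity.
  - destruct (dig J (S k) n) eqn:E; [|reflexivity].
    exfalso. apply r. apply (rho_dig J H k n); [lia|exact E].
Qed.

Lemma iter_dig J (H : NoHH J) k : Nat.iter k Rmap (val (dig J 0)) = val (dig J k).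
Proof.
  induction k. reflexivity. simpl Nat.iter. rewrite IHk. apply Rmap_dig, H.
Qed.

Definition Good (J : nat -> nat) := NoHH J /\ forall k, J k = 0%nat \/ J k = S k.

Lemma dig_pref J (G : Good J) k n : (n <= 2 * k + 2)%nat ->
  dig J k n = if Nat.eq_dec (J k) 0 then (if Nat.eq_dec n 0 then false else Nat.odd n) else false.
Proof.
  destruct G as [H1 H2]. intros Hn.
  destruct (Nat.eq_dec (J k) 0) as [E|E].
  - destruct (Nat.eq_dec n 0) as [->|Hn0]. apply dig_0, H1.
    assert (JS : J (S k) = S (S k)) by (destruct (H2 (S k)); [exfalso; apply (H1 k E); auto|auto]).
    destruct (Nat.even n) eqn:Ev.
    + apply Nat.even_spec in Ev. destruct Ev as [i Hi]. destruct i; [lia|].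
      replace n with (2 * J k + 2 * i + 2)%nat by lia. rewrite dig_even by exact H1.
      rewrite dig_low by (exact H1 || lia). rewrite <- Nat.negb_even.
      replace (2 * J k + 2 * i + 2)%nat with (2 * (S i))%nat by lia. rewrite Nat.even_mul. reflexivity.
    + assert (Od : Nat.odd n = true) by (rewrite <- Nat.negb_even, Ev; reflexivity).
      apply Nat.odd_spec in Od. destruct Od as [i Hi].
      replace n with (2 * J k + 2 * i + 1)%nat by lia. rewrite dig_odd by exact H1.
      rewrite dig_low by (exact H1 || lia). rewrite <- Nat.negb_even.
      replace (2 * J k + 2 * i + 1)%nat with (S (2 * i))%nat by lia.
      rewrite Nat.even_succ, Nat.odd_mul. reflexivity.
  - apply dig_low; [exact H1|]. destruct (H2 k); lia.
Qed.

Lemma close_lemma J J' (G : Good J) (G' : Good J') k :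
  (J k = 0%nat <-> J' k = 0%nat) ->
  Rabs (val (dig J k) - val (dig J' k)) <= (/2) ^ (2 * k + 2).
Proof.
  intros Hiff. apply val_agree. intros n Hn.
  rewrite (dig_pref J G k n Hn), (dig_pref J' G' k n Hn).
  destruct (Nat.eq_dec (J k) 0), (Nat.eq_dec (J' k) 0); tauto.
Qed.

Lemma far_lemma J J' (G : Good J) (G' : Good J') k :
  J k = 0%nat -> J' k <> 0%nat ->
  /4 <= Rabs (val (dig J k) - val (dig J' k)).
Proof.
  intros E E'.
  assert (A : /2 <= val (dig J k)).
  { eapply Rle_trans; [|apply (val_ge_term _ 1)]. unfold term.
    rewrite (dig_pref J G k 1) by lia. destruct Nat.eq_dec; [|contradiction]. simpl. lra. }
  assert (B : val (dig J' k) <= /4).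
  { rewrite (val_split _ 2). simpl.
    unfold term. rewrite !(dig_pref J' G' k) by lia.
    destruct Nat.eq_dec; [contradiction|]. pose proof (tail_le (dig J' k) 2). simpl in H. lra. }
  rewrite Rabs_pos_eq; lra.
Qed.

Definition Bn (i : nat) : nat := 2 ^ (2 ^ i).
Definition ep (k : nat) : nat := Nat.log2 (Nat.log2 k).
Definition nuq (m : nat) : nat := m - Nat.sqrt m * Nat.sqrt m.
Definition sq (u : nat -> bool) (i : nat) : bool :=
  if Nat.even i then false else u (nuq (Nat.div2 i)).
Definition ph (u : nat -> bool) (k : nat) : nat := if sq u (ep k) then 1 else 0.
Definition zz u k := Nat.even (k + ph u k).
Definition Hs u k := andb (negb (zz u k)) (zz u (S k)).
Definition Ju (u : nat -> bool) (k : nat) : nat := if Hs u k then 0 else S k.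

Lemma Ju_good u : Good (Ju u).
Proof.
  split.
  - intros k. unfold Ju. destruct (Hs u k) eqn:E; [|discriminate].
    intros _. unfold Hs in *. apply andb_prop in E. destruct E as [_ E].
    rewrite E. simpl. discriminate.
  - intros k. unfold Ju. destruct (Hs u k); auto.
Qed.

Lemma Ju_0 u k : Ju u k = 0%nat <-> Hs u k = true.
Proof. unfold Ju. destruct (Hs u k); split; congruence. Qed.

Lemma ep_eq i k : (Bn i <= k < Bn (S i))%nat -> ep k = i.
Proof.
  intros [H1 H2]. unfold ep, Bn in *.
  assert (Hk : (0 < k)%nat). { pose proof (Nat.pow_nonzero 2 (2^i)). lia. }
  assert (L1 : (2 ^ i <= Nat.log2 k)%nat).
  { rewrite <- (Nat.log2_pow2 (2^i)) by lia. apply Nat.log2_le_mono. exact H1. }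
  assert (L2 : (Nat.log2 k < 2 ^ S i)%nat). { apply (proj1 (Nat.log2_lt_pow2 k (2 ^ S i) Hk)). exact H2. }
  apply Nat.log2_unique; lia.
Qed.

Lemma Hs_in_epoch u k i : (Bn i <= k)%nat -> (S k < Bn (S i))%nat ->
  Hs u k = negb (Nat.even (k + if sq u i then 1 else 0)).
Proof.
  intros H1 H2. unfold Hs, zz, ph. rewrite (ep_eq i k) by lia. rewrite (ep_eq i (S k)) by lia.
  replace (S k + (if sq u i then 1 else 0))%nat with (S (k + (if sq u i then 1 else 0))) by lia.
  rewrite Nat.even_succ, <- Nat.negb_even.
  destruct (Nat.even _); reflexivity.
Qed.

Definition xv (u : nat -> bool) : R := val (dig (Ju u) 0).

Lemma iter_xv u k : Nat.iter k Rmap (xv u) = val (dig (Ju u) k).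
Proof. apply iter_dig. apply Ju_good. Qed.

Lemma cnt_S f m : length (filter f (seq 0 (S m))) =
  (length (filter f (seq 0 m)) + if f m then 1 else 0)%nat.
Proof. rewrite seq_S, filter_app, length_app. simpl. destruct (f m); simpl; lia. Qed.

Lemma cnt_le f a m : (forall k, (a <= k < m)%nat -> f k = false) ->
  (length (filter f (seq 0 m)) <= a)%nat.
Proof.
  induction m; intros H. simpl; lia.
  rewrite cnt_S. destruct (Nat.le_gt_cases a m).
  - rewrite H by lia. pose proof (IHm (fun k Hk => H k ltac:(lia))). lia.
  - pose proof (filter_length_le f (seq 0 (S m))). rewrite length_seq in H1.
    rewrite cnt_S in H1. lia.
Qed.

Lemma cnt_ge f a m : (forall k, (a <= k < m)%nat -> f k = true) ->
  (m <= length (filter f (seq 0 m)) + a)%nat.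
Proof.
  induction m; intros H. simpl; lia.
  rewrite cnt_S. destruct (Nat.le_gt_cases a m).
  - rewrite H by lia. pose proof (IHm (fun k Hk => H k ltac:(lia))). lia.
  - lia.
Qed.

Lemma cnt_tot f m : (length (filter f (seq 0 m)) <= m)%nat.
Proof. pose proof (filter_length_le f (seq 0 m)). rewrite length_seq in H. exact H. Qed.

Lemma freq_bounds x y d n : 0 <= close_freq x y d n <= 1.
Proof.
  unfold close_freq. destruct n as [|n].
  - unfold close_count. simpl. unfold Rdiv. rewrite Rmult_0_l. lra.
  - pose proof (cnt_tot (fun k => if Rlt_dec (Rabs (Nat.iter k Rmap x - Nat.iter k Rmap y)) d then true else false) (S n)).
    fold (close_count x y d (S n)) in H. apply le_INR in H.
    pose proof (pos_INR (close_count x y d (S n))). pose proof (lt_0_INR (S n) ltac:(lia)).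
    split. apply Rdiv_le_0_compat; lra.
    apply (Rmult_le_reg_r (INR (S n))); [lra|]. unfold Rdiv. rewrite Rmult_assoc, Rinv_l by lra. lra.
Qed.

Lemma INR_Bn i : INR (Bn i) = 2 ^ (2 ^ i).
Proof. unfold Bn. rewrite pow_INR. reflexivity. Qed.

Lemma Bn_S i : Bn (S i) = (Bn i * Bn i)%nat.
Proof. unfold Bn. rewrite Nat.pow_succ_r', <- Nat.pow_add_r. f_equal. lia. Qed.

Lemma Bn_ge i : (S i <= Bn i)%nat.
Proof.
  unfold Bn. pose proof (Nat.pow_gt_lin_r 2 i ltac:(lia)).
  pose proof (Nat.pow_gt_lin_r 2 (2^i) ltac:(lia)). lia.
Qed.

Lemma small_Bn eps : 0 < eps -> exists M, forall i, (M <= i)%nat -> 2 / INR (Bn i) < eps.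
Proof.
  intros He. destruct (pow_lt_1_zero (/2) ltac:(rewrite Rabs_pos_eq; lra) (eps / 2) ltac:(lra)) as [M HM].
  exists M. intros i Hi. specialize (HM (2 ^ i)%nat). rewrite Rabs_pos_eq in HM by (apply pow_le; lra).
  rewrite INR_Bn. rewrite pow_inv in HM.
  assert (0 < 2 ^ (2^i)) by (apply pow_lt; lra).
  pose proof (Nat.pow_gt_lin_r 2 i ltac:(lia)).
  specialize (HM ltac:(unfold ge; lia)).
  unfold Rdiv. apply (Rmult_lt_reg_r (/2)); [lra|]. rewrite Rmult_assoc, (Rmult_comm _ (/2)), <- Rmult_assoc.
  rewrite Rinv_r by lra. lra.
Qed.

Definition fclose x y d := (fun k : nat =>
     if Rlt_dec (Rabs (Nat.iter k Rmap x - Nat.iter k Rmap y)) d then true else false).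

Lemma Hs_diff u u' i k : sq u i <> sq u' i -> (Bn i <= k)%nat -> (S k < Bn (S i))%nat ->
  Hs u k <> Hs u' k.
Proof.
  intros Hd H1 H2. rewrite (Hs_in_epoch u k i H1 H2), (Hs_in_epoch u' k i H1 H2).
  destruct (sq u i), (sq u' i); try congruence;
  replace (k + 1)%nat with (S k) by lia; rewrite Nat.add_0_r, Nat.even_succ, <- Nat.negb_even;
  destruct (Nat.even k); discriminate.
Qed.

Lemma Hs_same u u' i k : sq u i = sq u' i -> (Bn i <= k)%nat -> (S k < Bn (S i))%nat ->
  Hs u k = Hs u' k.
Proof.
  intros Hd H1 H2. rewrite (Hs_in_epoch u k i H1 H2), (Hs_in_epoch u' k i H1 H2), Hd. reflexivity.
Qed.

Lemma far_at u u' i k : sq u i <> sq u' i -> (Bn i <= k)%nat -> (S k < Bn (S i))%nat ->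
  /4 <= Rabs (Nat.iter k Rmap (xv u) - Nat.iter k Rmap (xv u')).
Proof.
  intros Hd H1 H2. rewrite !iter_xv. pose proof (Hs_diff u u' i k Hd H1 H2).
  destruct (Hs u k) eqn:E.
  - apply far_lemma; try apply Ju_good. apply Ju_0, E. rewrite Ju_0. congruence.
  - rewrite Rabs_minus_sym. apply far_lemma; try apply Ju_good. apply Ju_0. destruct (Hs u' k); congruence.
    rewrite Ju_0. congruence.
Qed.

Lemma close_at u u' i k : sq u i = sq u' i -> (Bn i <= k)%nat -> (S k < Bn (S i))%nat ->
  Rabs (Nat.iter k Rmap (xv u) - Nat.iter k Rmap (xv u')) <= (/2) ^ (2 * k + 2).
Proof.
  intros Hd H1 H2. rewrite !iter_xv. apply close_lemma; try apply Ju_good.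
  rewrite !Ju_0. rewrite (Hs_same u u' i k Hd H1 H2). tauto.
Qed.

Lemma Bn_ge2 i : (1 <= i)%nat -> (S (Bn i) < Bn (S i))%nat.
Proof. intros H. rewrite Bn_S. pose proof (Bn_ge i). nia. Qed.

Lemma real_lo (B c : R) : 1 <= B -> c <= B + 1 -> c / (B * B) <= 2 / B.
Proof.
  intros H1 H2. unfold Rdiv. rewrite Rinv_mult.
  assert (HB : B * / B = 1) by (field; lra).
  assert (0 < / B) by (apply Rinv_0_lt_compat; lra).
  assert (/ B <= 1) by (rewrite <- Rinv_1; apply Rinv_le_contravar; lra).
  nra.
Qed.

Lemma real_hi (B c : R) : 1 <= B -> B * B <= c + B + 1 -> 1 - 2 / B <= c / (B * B).
Proof.
  intros H1 H2. unfold Rdiv. rewrite Rinv_mult.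
  assert (HB : B * / B = 1) by (field; lra).
  assert (0 < / B) by (apply Rinv_0_lt_compat; lra).
  assert (/ B <= 1) by (rewrite <- Rinv_1; apply Rinv_le_contravar; lra).
  nra.
Qed.

Lemma freq_lo u u' i : (1 <= i)%nat -> sq u i <> sq u' i ->
  close_freq (xv u) (xv u') (/4) (Bn (S i)) <= 2 / INR (Bn i).
Proof.
  intros Hi Hd. unfold close_freq, close_count.
  destruct (Bn (S i)) as [|m] eqn:EB. { pose proof (Bn_ge (S i)). lia. }
  rewrite cnt_S.
  pose proof (cnt_le (fclose (xv u) (xv u') (/4)) (Bn i) m) as H.
  assert (H' : (length (filter (fclose (xv u) (xv u') (/4)) (seq 0 m)) <= Bn i)%nat).
  { apply H. intros k Hk. unfold fclose. destruct Rlt_dec as [r|r]; [|reflexivity].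
    exfalso. pose proof (far_at u u' i k Hd ltac:(lia) ltac:(lia)). lra. }
  fold (fclose (xv u) (xv u') (/4)).
  rewrite <- EB, Bn_S, mult_INR.
  apply real_lo. { pose proof (Bn_ge i). apply le_INR in H0. rewrite S_INR in H0. pose proof (pos_INR i). lra. }
  replace 1 with (INR 1) by reflexivity. rewrite <- plus_INR. apply le_INR.
  destruct (Rlt_dec _ _); lia.
Qed.

Lemma freq_hi u u' i d : sq u i = sq u' i -> (forall k, (Bn i <= k)%nat -> (/2) ^ (2 * k + 2) < d) ->
  1 - 2 / INR (Bn i) <= close_freq (xv u) (xv u') d (Bn (S i)).
Proof.
  intros Hd Hsm. unfold close_freq, close_count.
  destruct (Bn (S i)) as [|m] eqn:EB. { pose proof (Bn_ge (S i)). lia. }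
  rewrite cnt_S.
  pose proof (cnt_ge (fclose (xv u) (xv u') d) (Bn i) m) as H.
  assert (H' : (m <= length (filter (fclose (xv u) (xv u') d) (seq 0 m)) + Bn i)%nat).
  { apply H. intros k Hk. unfold fclose. destruct Rlt_dec as [r|r]; [reflexivity|].
    exfalso. pose proof (close_at u u' i k Hd ltac:(lia) ltac:(lia)). specialize (Hsm k ltac:(lia)). lra. }
  fold (fclose (xv u) (xv u') d).
  rewrite <- EB, Bn_S, mult_INR.
  apply real_hi. { pose proof (Bn_ge i). apply le_INR in H0. rewrite S_INR in H0. pose proof (pos_INR i). lra. }
  rewrite <- mult_INR, <- Bn_S, EB.
  replace 1 with (INR 1) by reflexivity. rewrite <- !plus_INR. apply le_INR.
  destruct (Rlt_dec _ _); lia.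
Qed.

Lemma disagree u u' : u <> u' -> forall M, exists i, (M <= i)%nat /\ (1 <= i)%nat /\ sq u i <> sq u' i.
Proof.
  intros Hne M.
  assert (exists n0, u n0 <> u' n0) as [n0 Hn0].
  { apply NNPP. intros C. apply Hne. apply functional_extensionality. intros n.
    apply NNPP. intros C'. apply C. exists n. exact C'. }
  set (t := (M + n0 + 1)%nat). set (m := (t * t + n0)%nat).
  assert (Hs : Nat.sqrt m = t).
  { apply Nat.le_antisymm.
    - apply Nat.lt_succ_r. apply Nat.sqrt_lt_square. unfold m, t. nia.
    - apply Nat.sqrt_le_square. unfold m. lia. }
  exists (S (2 * m)). split; [unfold m, t; nia|]. split; [lia|].
  unfold sq. rewrite Nat.even_succ, Nat.odd_mul. simpl (Nat.odd 2). simpl andb.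
  cbv iota. rewrite Nat.div2_succ_double. unfold nuq. rewrite Hs.
  replace (m - t * t)%nat with n0 by (unfold m; lia). exact Hn0.
Qed.

Lemma xv_inj u u' : xv u = xv u' -> u = u'.
Proof.
  intros E. apply NNPP. intros Hne. destruct (disagree u u' Hne 0) as [i [_ [Hi Hd]]].
  pose proof (far_at u u' i (Bn i) Hd ltac:(lia) (Bn_ge2 i Hi)). rewrite E in H.
  rewrite Rminus_diag, Rabs_R0 in H. lra.
Qed.

Lemma pair_props u u' : u <> u' ->
  (forall delta, 0 < delta -> LimSup_seq (close_freq (xv u) (xv u') delta) = Finite 1) /\
  LimInf_seq (close_freq (xv u) (xv u') (/4)) = Finite 0.
Proof.
  intros Hne. split.
  - intros d Hd. apply is_LimSup_seq_unique. simpl. intros eps. split.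
    + intros N.
      destruct (pow_lt_1_zero (/2) ltac:(rewrite Rabs_pos_eq; lra) d Hd) as [M1 HM1].
      destruct (small_Bn eps (cond_pos eps)) as [M2 HM2].
      set (i := (2 * (N + M1 + M2))%nat).
      exists (Bn (S i)). split. { pose proof (Bn_ge (S i)). unfold i in *; lia. }
      assert (sq u i = sq u' i). { unfold sq, i. rewrite Nat.even_mul. reflexivity. }
      pose proof (freq_hi u u' i d H).
      assert (forall k, (Bn i <= k)%nat -> (/2) ^ (2 * k + 2) < d).
      { intros k Hk. pose proof (Bn_ge i). specialize (HM1 (2 * k + 2)%nat ltac:(unfold ge, i in *; lia)).
        rewrite Rabs_pos_eq in HM1 by (apply pow_le; lra). exact HM1. }
      specialize (H0 H1). specialize (HM2 i ltac:(unfold i; lia)). lra.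
    + exists 0%nat. intros n _. pose proof (freq_bounds (xv u) (xv u') d n). pose proof (cond_pos eps). lra.
  - apply is_LimInf_seq_unique. simpl. intros eps. split.
    + intros N. destruct (small_Bn eps (cond_pos eps)) as [M2 HM2].
      destruct (disagree u u' Hne (N + M2)) as [i [Hi [Hi1 Hd]]].
      exists (Bn (S i)). split. { pose proof (Bn_ge (S i)). lia. }
      pose proof (freq_lo u u' i Hi1 Hd). specialize (HM2 i ltac:(lia)). lra.
    + exists 0%nat. intros n _. pose proof (freq_bounds (xv u) (xv u') (/4) n). pose proof (cond_pos eps). lra.
Qed.

Lemma cantor (g : (nat -> bool) -> nat) : ~ (forall u v, g u = g v -> u = v).
Proof.
  intros Hinj.
  set (h := fun n => epsilon (inhabits (fun _ : nat => false)) (fun u => g u = n)).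
  set (d := fun n => negb (h n n)).
  assert (Hh : g (h (g d)) = g d). { unfold h. apply epsilon_spec. exists d. reflexivity. }
  apply Hinj in Hh. assert (d (g d) = negb (d (g d))).
  { unfold d at 1. rewrite Hh. reflexivity. }
  destruct (d (g d)); discriminate.
Qed.

Theorem proposition6p10 :
  exists (S : R -> Prop) (dbar : R),
    (forall x, S x -> 0 <= x <= 1) /\
    uncountable S /\
    0 < dbar /\
    forall x y, S x -> S y -> x <> y ->
      (forall delta, 0 < delta -> LimSup_seq (close_freq x y delta) = Finite 1) /\
      LimInf_seq (close_freq x y dbar) = Finite 0.
Proof.
  exists (fun x => exists u, x = xv u), (/4). split; [|split; [|split]].
  - intros x [u ->]. split. apply val_nonneg. apply val_le1. apply dig_0. apply Ju_good.
  - intros [f Hf]. apply (cantor (fun u => f (xv u))). intros u v E.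
    apply xv_inj. apply Hf; eauto.
  - lra.
  - intros x y [u ->] [u' ->] Hne. apply pair_props. intros ->. apply Hne. reflexivity.
Qed.
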